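(* Let $H$ be a finitely generated free abelian group. Then \[\ker\big(\mathrm{id}+*:\mathcal{P}(H)\to\mathcal{P}(H)\big)=\mathrm{im}\big(\mathrm{id}-*:\mathcal{P}(H)\to\mathcal{P}(H)\big)\] and \[\ker\big(\mathrm{id}+*:\mathcal{P}_T(H)\to\mathcal{P}_T(H)\big)=\mathrm{im}\big(\mathrm{id}-*:\mathcal{P}_T(H)\to\mathcal{P}_T(H)\big).\]
   Context: $V_H=H\otimes_{\mathbb{Z}}\mathbb{R}$. An integral polytope is the convex hull of a nonempty finite subset of $H\subseteq V_H$. $\mathcal{P}(H)$ is the Grothendieck group of the monoid of integral polytopes under Minkowski sum, and $\mathcal{P}_T(H)$ is the cokernel of $H\to\mathcal{P}(H)$, $h\mapsto\{h\}$. The involution $*$ is induced by $P\mapsto *P=\{-p:p\in P\}$, i.e. $*(P-Q)=*P-*Q$, on both groups. *)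

(* Defs.v *)
From HB Require Import structures.
From mathcomp Require Import all_boot all_order all_algebra.
Set Implicit Arguments. Unset Strict Implicit. Unset Printing Implicit Defensive.
Import Order.TTheory GRing.Theory Num.Theory.
Local Open Scope ring_scope.

(* H = Z^n (every f.g. free abelian group is isomorphic to some Z^n),
   realised as 'rV[int]_n; V_H = H (x) R = 'rV[R]_n.  Subsets of V_H are
   Prop-valued predicates. *)

Definition vset (R : realFieldType) (n : nat) := 'rV[R]_n -> Prop.

Definition embH (R : realFieldType) (n : nat) (h : 'rV[int]_n) : 'rV[R]_n :=
  map_mx (fun z : int => z%:~R) h.

Definition vset_eq (R : realFieldType) (n : nat) (A B : vset R n) : Prop :=
  forall v, A v <-> B v.

Definition conv_hull (R : realFieldType) (n : nat) (s : seq 'rV[int]_n)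
  : vset R n :=
  fun v => exists c : 'I_(size s) -> R,
    (forall i, 0 <= c i) /\ \sum_i c i = 1 /\
    v = \sum_i c i *: embH R (nth 0 s i).

Definition integral_polytope (R : realFieldType) (n : nat) (A : vset R n)
  : Prop :=
  exists s : seq 'rV[int]_n, s <> [::] /\ vset_eq A (@conv_hull R n s).

Definition msum (R : realFieldType) (n : nat) (A B : vset R n) : vset R n :=
  fun v => exists a b, A a /\ B b /\ v = a + b.

Definition neg (R : realFieldType) (n : nat) (A : vset R n) : vset R n :=
  fun v => A (- v).

Definition pt (R : realFieldType) (n : nat) (h : 'rV[int]_n) : vset R n :=
  fun v => v = embH R h.

(* Grothendieck group P(H): an element is a formal difference P - Q of
   integral polytopes, represented by the pair (P, Q); two pairs represent
   the same element iff P + Q' + K = P' + Q + K for some integral polytope K. *)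
Definition gpair (R : realFieldType) (n : nat) := (vset R n * vset R n)%type.

Definition is_gpair (R : realFieldType) (n : nat) (x : gpair R n) : Prop :=
  integral_polytope x.1 /\ integral_polytope x.2.

Definition gr_eq (R : realFieldType) (n : nat) (x y : gpair R n) : Prop :=
  exists K, integral_polytope K /\
    vset_eq (msum (msum x.1 y.2) K) (msum (msum y.1 x.2) K).

Definition gadd (R : realFieldType) (n : nat) (x y : gpair R n) : gpair R n :=
  (msum x.1 y.1, msum x.2 y.2).

Definition gopp (R : realFieldType) (n : nat) (x : gpair R n) : gpair R n :=
  (x.2, x.1).

Definition gzero (R : realFieldType) (n : nat) : gpair R n := (@pt R n 0, @pt R n 0).

Definition gstar (R : realFieldType) (n : nat) (x : gpair R n) : gpair R n :=
  (neg x.1, neg x.2).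

Definition id_plus_star (R : realFieldType) (n : nat) (x : gpair R n) :=
  gadd x (gstar x).
Definition id_minus_star (R : realFieldType) (n : nat) (x : gpair R n) :=
  gadd x (gopp (gstar x)).

Definition gpt (R : realFieldType) (n : nat) (h : 'rV[int]_n) : gpair R n :=
  (@pt R n h, @pt R n 0).

(* P_T(H) = coker (H -> P(H)): x and y have the same image iff
   x = y + {h} in P(H) for some h in H (the image of H is {[{h}] | h in H}). *)
Definition gTeq (R : realFieldType) (n : nat) (x y : gpair R n) : Prop :=
  exists h : 'rV[int]_n, gr_eq x (gadd y (@gpt R n h)).

(* Main.v *)
Require Import Defs.
From HB Require Import structures.
From mathcomp Require Import all_boot all_order all_algebra.
From mathcomp Require Import ring lra zify.
Set Implicit Arguments. Unset Strict Implicit. Unset Printing Implicit Defensive.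
Import Order.TTheory GRing.Theory Num.Theory.
Local Open Scope ring_scope.

Section Core.
Variable R : realFieldType.

Definition dotz n (u : 'rV[R]_n) (p : 'rV[int]_n) : R := \sum_j u 0 j * (p 0 j)%:~R.

Definition tl (T : Type) n (p : 'rV[T]_n.+1) : 'rV[T]_n := \row_j p 0 (lift ord0 j).
Definition c0 (T : Type) n (x : T) (q : 'rV[T]_n) : 'rV[T]_n.+1 :=
  \row_c (oapp (fun j => q 0 j) x (unlift ord0 c)).

Lemma tl_c0 (T : Type) n (x : T) (q : 'rV[T]_n) : tl (c0 x q) = q.
Proof. by apply/rowP => j; rewrite !mxE liftK. Qed.
Lemma c0_0 (T : Type) n (x : T) (q : 'rV[T]_n) : (c0 x q) 0 ord0 = x.
Proof. by rewrite !mxE unlift_none. Qed.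
Lemma tlN (V : zmodType) n (u : 'rV[V]_n.+1) : tl (- u) = - tl u.
Proof. by apply/rowP => j; rewrite !mxE. Qed.

Lemma dotzD n (u : 'rV[R]_n) p q : dotz u (p + q) = dotz u p + dotz u q.
Proof. rewrite /dotz -big_split /=; apply: eq_bigr => j _; rewrite mxE intrD; ring. Qed.
Lemma dotzN n (u : 'rV[R]_n) p : dotz u (- p) = - dotz u p.
Proof. rewrite /dotz -sumrN; apply: eq_bigr => j _; rewrite mxE intrN; ring. Qed.
Lemma dotNz n (u : 'rV[R]_n) p : dotz (- u) p = - dotz u p.
Proof. rewrite /dotz -sumrN; apply: eq_bigr => j _; rewrite mxE; ring. Qed.
Lemma dotz_cons n (u : 'rV[R]_n.+1) p :
  dotz u p = u 0 ord0 * (p 0 ord0)%:~R + dotz (tl u) (tl p).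
Proof. by rewrite /dotz big_ord_recl; congr (_ + _); apply: eq_bigr => j _; rewrite !mxE. Qed.
Lemma dotz0 (u : 'rV[R]_0) p : dotz u p = 0.
Proof. by rewrite /dotz big_ord0. Qed.

Definition H n (s : seq 'rV[int]_n) (u : 'rV[R]_n) : R :=
  foldr (fun p m => Num.max (dotz u p) m) (dotz u (head 0 s)) s.

Lemma foldr_ub n (s : seq 'rV[int]_n) u x p : p \in s ->
  dotz u p <= foldr (fun p m => Num.max (dotz u p) m) x s.
Proof.
elim: s => //= a s IH; rewrite inE => /orP [/eqP -> | /IH h].
  by rewrite le_max lexx.
by rewrite le_max h orbT.
Qed.

Lemma foldr_att n (s : seq 'rV[int]_n) u x :
  foldr (fun p m => Num.max (dotz u p) m) x s = x \/
  exists2 p, p \in s & foldr (fun p m => Num.max (dotz u p) m) x s = dotz u p.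
Proof.
elim: s => [|a s IH] /=; first by left.
have [h|h] := leP (dotz u a) (foldr (fun p m => Num.max (dotz u p) m) x s).
  case: IH => [->|[p ps ->]]; [by left|].
  by right; exists p => //; rewrite inE ps orbT.
right; exists a => //; exact: mem_head.
Qed.

Lemma H_ub n (s : seq 'rV[int]_n) u p : p \in s -> dotz u p <= H s u.
Proof. exact: foldr_ub. Qed.

Lemma H_att n (s : seq 'rV[int]_n) u : s != [::] -> exists2 p, p \in s & H s u = dotz u p.
Proof.
case: s => [//|a s] _; rewrite /H; case: (foldr_att (a :: s) u (dotz u (head 0 (a :: s)))) => [->|//].
by exists a => //; exact: mem_head.
Qed.

Lemma H_char n (s : seq 'rV[int]_n) u m : s != [::] ->
  (forall p, p \in s -> dotz u p <= m) -> (exists2 p, p \in s & dotz u p = m) -> H s u = m.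
Proof.
move=> ne ub [p ps pm]; apply/le_anti; apply/andP; split; last by rewrite -pm; exact: H_ub.
by have [q qs ->] := H_att u ne; apply: ub.
Qed.

Lemma H_map n k (s : seq 'rV[int]_n) (f : 'rV[int]_n -> 'rV[int]_k) u v :
  s != [::] -> (forall p, dotz u (f p) = dotz v p) -> H (map f s) u = H s v.
Proof.
move=> ne hf; apply: H_char.
- by case: s ne.
- by move=> q /mapP [p ps ->]; rewrite hf; apply: H_ub.
- have [p ps ->] := H_att v ne; exists (f p); [exact: map_f | exact: hf].
Qed.

Lemma H_neg n (s : seq 'rV[int]_n) u : s != [::] -> H (map -%R s) u = H s (- u).
Proof. by move=> ne; apply: H_map => // p; rewrite dotzN dotNz. Qed.

Lemma H_0 (s : seq 'rV[int]_0) u : s != [::] -> H s u = 0.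
Proof.
move=> ne; apply: H_char => //; first by move=> p _; rewrite dotz0.
by case: s ne => // a s _; exists a; rewrite ?mem_head ?dotz0.
Qed.

Definition pairs n (s t : seq 'rV[int]_n) := [seq p + q | p <- s, q <- t].

Lemma pairs_ne n (s t : seq 'rV[int]_n) : s != [::] -> t != [::] -> pairs s t != [::].
Proof. by case: s => // a s; case: t. Qed.

Lemma H_pairs n (s t : seq 'rV[int]_n) u : s != [::] -> t != [::] ->
  H (pairs s t) u = H s u + H t u.
Proof.
move=> ns nt; apply: H_char; first exact: pairs_ne.
- move=> z /allpairsP [[p q] /= [ps qt ->]]; rewrite dotzD.
  by apply: lerD; apply: H_ub.
- have [p ps ->] := H_att u ns; have [q qt ->] := H_att u nt.
  by exists (p + q); [exact: allpairs_f | rewrite dotzD].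
Qed.

Lemma H_c0 n (a : seq 'rV[int]_n) (u : 'rV[R]_n.+1) : a != [::] ->
  H (map (c0 0) a) u = H a (tl u).
Proof. by move=> ne; apply: H_map => // p; rewrite dotz_cons c0_0 tl_c0 mulr0 add0r. Qed.

Definition splus n (s : seq 'rV[int]_n.+1) (T : int) :=
  s ++ map (fun p => c0 (- T) (tl p)) s.

Lemma H_splus_pos n (s : seq 'rV[int]_n.+1) T (u : 'rV[R]_n.+1) : s != [::] ->
  (forall p, p \in s -> - T <= p 0 ord0) -> 0 <= u 0 ord0 -> H (splus s T) u = H s u.
Proof.
move=> ne hT hu; apply: H_char.
- by move: ne; rewrite /splus; case: (s).
- move=> q; rewrite mem_cat => /orP [qs|/mapP [p ps ->]]; first exact: H_ub.
  apply: le_trans (H_ub u ps); rewrite !dotz_cons c0_0 tl_c0 lerD2r.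
  by apply: ler_wpM2l => //; rewrite ler_int hT.
- have [p ps ->] := H_att u ne; by exists p => //; rewrite mem_cat ps.
Qed.

Lemma H_splus_neg n (s : seq 'rV[int]_n.+1) T (u : 'rV[R]_n.+1) : s != [::] ->
  (forall p, p \in s -> - T <= p 0 ord0) -> u 0 ord0 <= 0 ->
  H (splus s T) u = H s (c0 0 (tl u)) + u 0 ord0 * (- T)%:~R.
Proof.
have key p : dotz (c0 0 (tl u)) p = dotz (tl u) (tl p).
  by rewrite dotz_cons c0_0 tl_c0 mul0r add0r.
move=> ne hT hu; apply: H_char.
- by move: ne; rewrite /splus; case: (s).
- move=> q; rewrite mem_cat => /orP [qs|/mapP [p ps ->]].
    rewrite dotz_cons addrC; apply: lerD; first by rewrite -key; apply: H_ub.
    by apply: ler_wnM2l => //; rewrite ler_int hT.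
  rewrite dotz_cons c0_0 tl_c0 addrC lerD2r -key; exact: H_ub.
- have [p ps ->] := H_att (c0 0 (tl u)) ne; exists (c0 (- T) (tl p)).
    by rewrite mem_cat; apply/orP; right; apply: map_f.
  by rewrite dotz_cons c0_0 tl_c0 key addrC.
Qed.

Definition Tb n (l : seq 'rV[int]_n.+1) : int := foldr (fun (p : 'rV[int]_n.+1) (acc : int) => `|p 0 ord0| + acc) 0 l.

Lemma Tb_ge0 n (l : seq 'rV[int]_n.+1) : 0 <= Tb l.
Proof. by elim: l => //= a l IH; apply: addr_ge0. Qed.

Lemma Tb_bound n (l : seq 'rV[int]_n.+1) p : p \in l -> - Tb l <= p 0 ord0.
Proof.
elim: l => //= a l IH; rewrite inE => /orP [/eqP ->|/IH h].
  have := ler_norm (- a 0 ord0); rewrite normrN; have := Tb_ge0 l; lia.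
have := normr_ge0 (a 0 ord0); lia.
Qed.


Lemma c0N n (v : 'rV[R]_n) : c0 0 (- v) = - c0 0 v.
Proof. apply/rowP => j; rewrite !mxE; case: unlift => //= [k|]; rewrite ?mxE ?oppr0 //. Qed.

Lemma neg0 (u : 'rV[R]_0) : u = - u.
Proof. by apply/rowP => - []. Qed.

Lemma N0 n (u : 'rV[R]_n.+1) : (- u) 0 ord0 = - u 0 ord0.
Proof. by rewrite mxE. Qed.

Lemma H_tl n (s : seq 'rV[int]_n.+1) v : s != [::] -> H (map (@tl _ n) s) v = H s (c0 0 v).
Proof. by move=> ne; apply: H_map => // p; rewrite [RHS]dotz_cons c0_0 tl_c0 mul0r add0r. Qed.

Lemma core n : forall (s t : seq 'rV[int]_n), s != [::] -> t != [::] ->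
  (forall u, H s u + H s (- u) = H t u + H t (- u)) ->
  exists a b, [/\ a != [::], b != [::] &
    forall u, H s u + H b u + H a (- u) = H a u + H b (- u) + H t u].
Proof.
elim: n => [|n IH] s t ns nt hyp.
  exists [:: 0], [:: 0]; split => // u.
  rewrite !H_0 //; lra.
have ns0 : map (@tl _ n) s != [::] by case: (s) ns.
have nt0 : map (@tl _ n) t != [::] by case: (t) nt.
have [a0 [b0 [na0 nb0 e0]]] := IH _ _ ns0 nt0
  (fun v => ltac:(rewrite !H_tl // c0N; exact: hyp)).
set a1 := map (c0 0) a0; set b1 := map (c0 0) b0.
have na1 : a1 != [::] by rewrite /a1; case: (a0) na0.
have nb1 : b1 != [::] by rewrite /b1; case: (b0) nb0.
have nna1 : map -%R a1 != [::] by case: (a1) na1.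
have nnb1 : map -%R b1 != [::] by case: (b1) nb1.
set s' := pairs (pairs s b1) (map -%R a1).
set t' := pairs (pairs t a1) (map -%R b1).
have ns' : s' != [::] by apply: pairs_ne => //; apply: pairs_ne.
have nt' : t' != [::] by apply: pairs_ne => //; apply: pairs_ne.
have Hs' u : H s' u = H s u + H b0 (tl u) + H a0 (- tl u).
  rewrite /s' !H_pairs ?pairs_ne // H_neg // !H_c0 // tlN ?addrA //.
have Ht' u : H t' u = H t u + H a0 (tl u) + H b0 (- tl u).
  rewrite /t' !H_pairs ?pairs_ne // H_neg // !H_c0 // tlN ?addrA //.
set T := Tb (s' ++ t').
have hTs p : p \in s' -> - T <= p 0 ord0.
  by move=> ps; apply: Tb_bound; rewrite mem_cat ps.
have hTt p : p \in t' -> - T <= p 0 ord0.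
  by move=> ps; apply: Tb_bound; rewrite mem_cat ps orbT.
set a2 := splus s' T; set b2 := splus t' T.
have na2 : a2 != [::] by rewrite /a2 /splus; case: (s') ns'.
have nb2 : b2 != [::] by rewrite /b2 /splus; case: (t') nt'.
have neg_eq (u : 'rV[R]_n.+1) : u 0 ord0 <= 0 -> H a2 u = H b2 u.
  move=> hu; rewrite /a2 /b2 !H_splus_neg // Hs' Ht' !tl_c0.
  have := e0 (tl u); rewrite -!H_tl //; lra.
exists (pairs a2 a1), (pairs b2 b1); split; try by apply: pairs_ne.
move=> u; rewrite !H_pairs // !H_c0 // tlN.
have hu := hyp u.
have [hx|hx] := lerP 0 (u 0 ord0).
  have e1 := neg_eq (- u) ltac:(rewrite N0; lra).
  have ea : H a2 u = H s' u by apply: H_splus_pos.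
  have eb : H b2 u = H t' u by apply: H_splus_pos.
  rewrite ea eb e1 Hs' Ht'; lra.
have e1 := neg_eq u ltac:(lra).
have ea : H a2 (- u) = H s' (- u) by apply: H_splus_pos => //; rewrite N0; lra.
have eb : H b2 (- u) = H t' (- u) by apply: H_splus_pos => //; rewrite N0; lra.
rewrite ea eb e1 Hs' Ht' tlN opprK; lra.
Qed.


Definition dotr n (u v : 'rV[R]_n) : R := \sum_j u 0 j * v 0 j.
Lemma dotr_c0 n (u : 'rV[R]_n.+1) x q : dotr u (c0 x q) = u 0 ord0 * x + dotr (tl u) q.
Proof.
rewrite /dotr big_ord_recl !mxE unlift_none /=; congr (_ + _).
by apply: eq_bigr => j _; rewrite !mxE liftK.
Qed.

Lemma dotr_tl_lin n (u v : 'rV[R]_n.+1) l m x :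
  dotr (tl (l *: u + m *: v)) x = l * dotr (tl u) x + m * dotr (tl v) x.
Proof.
rewrite /dotr !mulr_sumr -big_split /=; apply: eq_bigr => j _; rewrite !mxE; ring.
Qed.

Lemma fin_max (I : finType) (i0 : I) (f : I -> R) : exists i, forall j, f j <= f i.
Proof.
case: (@arg_maxP _ _ I i0 predT f isT) => i _ h; exists i => j; exact: h.
Qed.

Lemma sum_delta (I : finType) (i : I) (F : I -> R) : \sum_j (i == j)%:R * F j = F i.
Proof.
rewrite (bigD1 i) //= big1 => [|j /negbTE]; first by rewrite eqxx mul1r addr0.
by rewrite eq_sym => ->; rewrite mul0r.
Qed.

Lemma sandwich (ls us : seq R) : (forall l u, l \in ls -> u \in us -> l <= u) ->
  exists x, (forall l, l \in ls -> l <= x) /\ (forall u, u \in us -> x <= u).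
Proof.
elim: ls => [|l ls IH] h.
  elim: us {h} => [|u us [x [_ hx]]]; first by exists 0.
  exists (Num.min u x); split => // w; rewrite inE => /orP [/eqP ->|/hx].
    by rewrite ge_min lexx.
  by move=> hw; rewrite ge_min hw orbT.
have [x [h1 h2]] := IH (fun l' u l'i ui => h l' u (@mem_behead _ (l :: ls) l' l'i) ui).
exists (Num.max l x); split.
  by move=> w; rewrite inE => /orP [/eqP ->|/h1 hw]; rewrite le_max ?lexx // hw orbT.
by move=> u ui; rewrite ge_max h2 // andbT; apply: h ui; apply: mem_head.
Qed.

Lemma FM k : forall (I : finType) (a : I -> 'rV[R]_k) (b : I -> R),
  (forall y : I -> R, (forall i, 0 <= y i) -> \sum_i y i *: a i = 0 ->
     0 <= \sum_i y i * b i) ->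
  exists x : 'rV[R]_k, forall i, dotr (a i) x <= b i.
Proof.
elim: k => [|k IH] I a b hy.
  exists 0 => i; rewrite /dotr big_ord0.
  have := hy (fun j => (i == j)%:R) (fun j => ler0n _ _) ltac:(by apply/rowP => - []).
  by rewrite sum_delta.
pose al i := a i 0 ord0.
pose lam (p : I * I) := if (0 < al p.1) && (al p.2 < 0) then - al p.2
  else if (p.1 == p.2) && (al p.1 == 0) then 1 else 0.
pose mu (p : I * I) := if (0 < al p.1) && (al p.2 < 0) then al p.1 else 0.
have lam_ge0 p : 0 <= lam p.
  rewrite /lam; case: ifP => [/andP [_ h]|_]; first by rewrite oppr_ge0 ltW.
  by case: ifP.
have mu_ge0 p : 0 <= mu p by rewrite /mu; case: ifP => // /andP [h _]; rewrite ltW.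
have lm0 p : lam p * al p.1 + mu p * al p.2 = 0.
  rewrite /lam /mu; case: ifP => [_|_]; first ring.
  case: ifP => [/andP [_ /eqP ->]|_]; ring.
pose a' p := tl (lam p *: a p.1 + mu p *: a p.2).
pose b' p := lam p * b p.1 + mu p * b p.2.
have transfer (y' : I * I -> R) (F : I -> R) :
  \sum_i (\sum_p y' p * (lam p * (p.1 == i)%:R + mu p * (p.2 == i)%:R)) * F i =
  \sum_p y' p * (lam p * F p.1 + mu p * F p.2).
  under eq_bigr do rewrite mulr_suml.
  rewrite exchange_big /=; apply: eq_bigr => p _.
  rewrite -[RHS](congr2 (fun x y => y' p * (lam p * x + mu p * y))
    (sum_delta p.1 F) (sum_delta p.2 F)).
  rewrite !mulr_sumr -big_split mulr_sumr /=; apply: eq_bigr => i _; ring.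
have [x' hx'] : exists x' : 'rV[R]_k, forall p, dotr (a' p) x' <= b' p.
  apply: IH => y' y'0 hsum.
  pose y i := \sum_p y' p * (lam p * (p.1 == i)%:R + mu p * (p.2 == i)%:R).
  have y0 i : 0 <= y i.
    apply: sumr_ge0 => p _; apply: mulr_ge0 => //.
    by apply: addr_ge0; apply: mulr_ge0.
  have := hy y y0; rewrite (transfer y' b); apply.
  apply/rowP => c; rewrite summxE mxE.
  under eq_bigr do rewrite mxE.
  rewrite (transfer y' (fun i => a i 0 c)).
  case: (unliftP ord0 c) => [c' ->|->].
    transitivity ((\sum_p y' p *: a' p) 0 c'); last by rewrite hsum mxE.
    rewrite summxE; apply: eq_bigr => p _; rewrite !mxE; ring.
  by apply: big1 => p _; rewrite lm0 mulr0.
pose r i := b i - dotr (tl (a i)) x'.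
have hr p : 0 <= lam p * r p.1 + mu p * r p.2.
  have := hx' p; rewrite /a' /b' dotr_tl_lin /r; lra.
pose ls := [seq r j / al j | j <- enum I & al j < 0].
pose us := [seq r j / al j | j <- enum I & 0 < al j].
have [x0 [hl hu]] : exists x, (forall l, l \in ls -> l <= x) /\ (forall u, u \in us -> x <= u).
  apply: sandwich => l u /mapP [j]; rewrite mem_filter => /andP [hj _] -> /mapP [i].
  rewrite mem_filter => /andP [hi _] ->.
  have := hr (i, j); rewrite /lam /mu /= hi hj /=.
  have ai : al i != 0 by rewrite gt_eqF.
  have aj : al j != 0 by rewrite lt_eqF.
  set qi := r i / al i; set qj := r j / al j.
  have -> : r i = qi * al i by rewrite /qi divfK.
  have -> : r j = qj * al j by rewrite /qj divfK.
  move=> h.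
  have h2 : 0 <= (al i * - al j) * (qi - qj) by lra.
  have hp : 0 < al i * - al j by apply: mulr_gt0; lra.
  by rewrite -subr_ge0; rewrite (pmulr_rge0 _ hp) in h2.
exists (c0 x0 x') => i; rewrite dotr_c0.
have e : b i = r i + dotr (tl (a i)) x' by rewrite /r; ring.
rewrite e lerD2r -/(al i).
have [hi|hi|hi] := ltgtP (al i) 0.
- have := hl (r i / al i) ltac:(by apply: map_f; rewrite mem_filter hi mem_enum).
  have ai : al i != 0 by rewrite lt_eqF.
  set q := r i / al i; have -> : r i = q * al i by rewrite /q divfK.
  move=> h; nra.
- have := hu (r i / al i) ltac:(by apply: map_f; rewrite mem_filter hi mem_enum).
  have ai : al i != 0 by rewrite gt_eqF.
  set q := r i / al i; have -> : r i = q * al i by rewrite /q divfK.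
  move=> h; nra.
- have := hr (i, i); rewrite /lam /mu /= hi ltxx /= eqxx /= => h.
  rewrite eqxx in h; rewrite mul0r; lra.
Qed.


Lemma dotrN n (u x : 'rV[R]_n) : dotr (- u) x = - dotr u x.
Proof. rewrite /dotr -sumrN; apply: eq_bigr => j _; rewrite mxE; ring. Qed.
Lemma dotr_row n (f : 'I_n -> R) (x : 'rV[R]_n) : dotr (\row_j f j) x = \sum_j f j * x 0 j.
Proof. by apply: eq_bigr => j _; rewrite mxE. Qed.
Lemma dotrC n (u x : 'rV[R]_n) : dotr u x = dotr x u.
Proof. by apply: eq_bigr => j _; rewrite mulrC. Qed.
Lemma dotrZsum n (I : finType) (c : I -> R) (p : I -> 'rV[R]_n) u :
  dotr u (\sum_i c i *: p i) = \sum_i c i * dotr u (p i).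
Proof.
rewrite /dotr; under eq_bigr do rewrite summxE mulr_sumr.
rewrite exchange_big /=; apply: eq_bigr => i _; rewrite mulr_sumr.
by apply: eq_bigr => j _; rewrite mxE; ring.
Qed.

Definition Idx m n := (('I_m + 'I_n) + ('I_n + bool))%type.

Lemma farkas_ord m n (p : 'I_m -> 'rV[R]_n) (v : 'rV[R]_n) :
  (forall u, exists i, dotr u v <= dotr u (p i)) ->
  exists c : 'I_m -> R, [/\ forall i, 0 <= c i, \sum_i c i = 1 & v = \sum_i c i *: p i].
Proof.
move=> hyp.
pose a (r : Idx m n) : 'rV[R]_m := match r with
  | inl (inl i) => - \row_j (i == j)%:R
  | inl (inr d) => \row_j p j 0 d
  | inr (inl d) => - \row_j p j 0 d
  | inr (inr true) => \row_j 1
  | inr (inr false) => - \row_j 1 end.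
pose b (r : Idx m n) : R := match r with
  | inl (inl i) => 0
  | inl (inr d) => v 0 d
  | inr (inl d) => - v 0 d
  | inr (inr true) => 1
  | inr (inr false) => -1 end.
have [x hx] : exists x : 'rV[R]_m, forall r, dotr (a r) x <= b r.
  apply: FM => y y0 hsum.
  pose u := \row_d (y (inl (inr d)) - y (inr (inl d))).
  pose cc := y (inr (inr true)) - y (inr (inr false)).
  have ej j : - y (inl (inl j)) + dotr u (p j) + cc = 0.
    have := congr1 (fun M : 'rV[R]_m => M 0 j) hsum.
    rewrite summxE mxE !big_sumType big_bool /= !mxE => <-.
    under [in RHS]eq_bigr do rewrite !mxE.
    under [X in _ = _ + X + _]eq_bigr do rewrite !mxE.
    under [X in _ = _ + (X + _)]eq_bigr do rewrite !mxE.
    have -> : \sum_i y (inl (inl i)) * - (i == j)%:R = - y (inl (inl j)).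
      transitivity (- \sum_i (j == i)%:R * y (inl (inl i))); last by rewrite sum_delta.
      rewrite -sumrN; apply: eq_bigr => i _; rewrite eq_sym.
      by case: (j == i); rewrite /= ?mulr1n ?mulr0n; ring.
    rewrite /u /cc dotr_row.
    have -> : \sum_i (y (inl (inr i)) - y (inr (inl i))) * p j 0 i =
       \sum_i y (inl (inr i)) * p j 0 i + \sum_i y (inr (inl i)) * - p j 0 i.
      rewrite -big_split; apply: eq_bigr => i _ /=; ring.
    ring.
  have -> : \sum_r y r * b r = dotr u v + cc.
    rewrite !big_sumType big_bool /= big1 ?add0r => [|i _]; last by rewrite mulr0.
    rewrite /u /cc dotr_row.
    have -> : \sum_i (y (inl (inr i)) - y (inr (inl i))) * v 0 i =
       \sum_i y (inl (inr i)) * v 0 i + \sum_i y (inr (inl i)) * - v 0 i.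
      rewrite -big_split; apply: eq_bigr => i _ /=; ring.
    ring.
  have [i hi] := hyp (- u).
  rewrite !dotrN lerN2 in hi.
  have := ej i; have := y0 (inl (inl i)); lra.
exists (fun i => x 0 i); split.
- move=> i; have := hx (inl (inl i)); rewrite /= dotrN dotr_row.
  by rewrite (sum_delta i (fun j => x 0 j)) oppr_le0.
- have h1 := hx (inr (inr true)); have h2 := hx (inr (inr false)).
  rewrite /= ?dotrN dotr_row in h1 h2.
  have s1 : \sum_j 1 * x 0 j = \sum_j x 0 j by apply: eq_bigr => j _; rewrite mul1r.
  rewrite s1 in h1 h2.
  apply/le_anti; rewrite h1 /=; lra.
- apply/rowP => d; rewrite summxE.
  have h1 := hx (inl (inr d)); have h2 := hx (inr (inl d)).
  rewrite /= ?dotrN dotr_row in h1 h2.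
  have -> : \sum_i (x 0 i *: p i) 0 d = \sum_j p j 0 d * x 0 j.
    by apply: eq_bigr => i _; rewrite mxE mulrC.
  apply/le_anti; rewrite h1 /=; lra.
Qed.




Lemma sum_rank (I : finType) (V : nmodType) (F : 'I_#|I| -> V) :
  \sum_(i : I) F (enum_rank i) = \sum_k F k.
Proof.
rewrite (reindex (@enum_val I predT)); last by exists enum_rank => k _; [rewrite enum_valK|rewrite enum_rankK].
by apply: eq_bigr => k _; rewrite enum_valK.
Qed.

Definition conv_fun n (I : finType) (p : I -> 'rV[R]_n) : vset R n :=
  fun v => exists c : I -> R, (forall i, 0 <= c i) /\ \sum_i c i = 1 /\
    v = \sum_i c i *: p i.

Lemma farkas n (I : finType) (p : I -> 'rV[R]_n) v :
  (forall u, exists i, dotr u v <= dotr u (p i)) -> conv_fun p v.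
Proof.
move=> hyp.
have hyp' : forall u, exists k : 'I_#|I|, dotr u v <= dotr u (p (enum_val k)).
  by move=> u; have [i h] := hyp u; exists (enum_rank i); rewrite enum_rankK.
have [c [c0 c1 cv]] := @farkas_ord #|I| n (fun k => p (enum_val k)) v hyp'.
exists (fun i => c (enum_rank i)); split => //; split.
  by rewrite (sum_rank (fun k => c k)).
rewrite cv -(sum_rank (fun k => c k *: p (enum_val k))).
by apply: eq_bigr => i _; rewrite enum_rankK.
Qed.

Lemma sum_deltaV n (I : finType) (i : I) (F : I -> 'rV[R]_n) :
  \sum_j (i == j)%:R *: F j = F i.
Proof.
rewrite (bigD1 i) //= big1 => [|j /negbTE]; first by rewrite eqxx scale1r addr0.
by rewrite eq_sym => ->; rewrite scale0r.
Qed.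

Lemma conv_pt n (I : finType) (p : I -> 'rV[R]_n) i : conv_fun p (p i).
Proof.
exists (fun j => (i == j)%:R); split; first by move=> j; apply: ler0n.
split; last by rewrite sum_deltaV.
by rewrite -[RHS](sum_delta i (fun _ => 1)); apply: eq_bigr => j _; rewrite mulr1.
Qed.

Lemma dotrD n (u a b : 'rV[R]_n) : dotr u (a + b) = dotr u a + dotr u b.
Proof. rewrite /dotr -big_split; apply: eq_bigr => j _; by rewrite mxE mulrDr. Qed.

Lemma dotrNr n (u a : 'rV[R]_n) : dotr u (- a) = - dotr u a.
Proof. by rewrite dotrC dotrN dotrC. Qed.

Lemma conv_bound n (I : finType) (p : I -> 'rV[R]_n) u m v :
  conv_fun p v -> (forall i, dotr u (p i) <= m) -> dotr u v <= m.
Proof.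
move=> [c [c0 [c1 ->]]] h; rewrite dotrZsum.
apply: le_trans (_ : \sum_i c i * m <= m).
  by apply: ler_sum => i _; apply: ler_wpM2l.
by rewrite -mulr_suml c1 mul1r.
Qed.

Definition Supp n (A : vset R n) (u : 'rV[R]_n) (m : R) :=
  (forall v, A v -> dotr u v <= m) /\ (exists v, A v /\ dotr u v = m).

Definition Polyt n (A : vset R n) :=
  exists I : finType, exists i0 : I, exists p : I -> 'rV[R]_n, vset_eq A (conv_fun p).

Lemma Polyt_supp n (A : vset R n) u : Polyt A -> exists m, Supp A u m.
Proof.
move=> [I [i0 [p e]]]; have [i hi] := fin_max i0 (fun i => dotr u (p i)).
exists (dotr u (p i)); split.
  by move=> v /e hv; apply: conv_bound hv _.
by exists (p i); split => //; apply/e; apply: conv_pt.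
Qed.

Lemma Polyt_FP n (A : vset R n) v : Polyt A ->
  (forall u, exists w, A w /\ dotr u v <= dotr u w) -> A v.
Proof.
move=> [I [i0 [p e]]] h; apply/e; apply: farkas => u.
have [i hi] := fin_max i0 (fun i => dotr u (p i)).
have [w [/e hw hvw]] := h u; exists i; apply: le_trans hvw _.
exact: conv_bound hw _.
Qed.

Lemma Supp_uniq n (A : vset R n) u m1 m2 : Supp A u m1 -> Supp A u m2 -> m1 = m2.
Proof.
move=> [b1 [v1 [a1 e1]]] [b2 [v2 [a2 e2]]]; apply/le_anti.
by apply/andP; split; [rewrite -e1; apply: b2 | rewrite -e2; apply: b1].
Qed.

Lemma Supp_eq n (A B : vset R n) u m : vset_eq A B -> Supp A u m -> Supp B u m.
Proof.
move=> e [b [v [av ev]]]; split; first by move=> w /e; apply: b.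
by exists v; split => //; apply/e.
Qed.

Lemma poly_eq n (X Y : vset R n) : Polyt X -> Polyt Y ->
  (forall u, exists m, Supp X u m /\ Supp Y u m) -> vset_eq X Y.
Proof.
move=> pX pY h v; split => hv.
  apply: Polyt_FP => // u; have [m [[bX _] [_ [w [wY ew]]]]] := h u.
  by exists w; split => //; rewrite ew; apply: bX.
apply: Polyt_FP => // u; have [m [[_ [w [wX ew]]] [bY _]]] := h u.
by exists w; split => //; rewrite ew; apply: bY.
Qed.

Lemma Supp_msum n (A B : vset R n) u m1 m2 :
  Supp A u m1 -> Supp B u m2 -> Supp (msum A B) u (m1 + m2).
Proof.
move=> [bA [a [aA ea]]] [bB [b [bB' eb]]]; split.
  by move=> v [x [y [xA [yB ->]]]]; rewrite dotrD; apply: lerD; [apply: bA|apply: bB].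
by exists (a + b); split; [exists a, b | rewrite dotrD ea eb].
Qed.

Lemma Supp_neg n (A : vset R n) u m : Supp A (- u) m -> Supp (neg A) u m.
Proof.
move=> [bA [a [aA ea]]]; split.
  by move=> v hv; have := bA _ hv; rewrite dotrN dotrNr opprK.
exists (- a); split; first by rewrite /neg opprK.
by rewrite dotrNr -dotrN.
Qed.

Lemma Supp_pt n (h : 'rV[int]_n) u : Supp (@pt R n h) u (dotr u (embH R h)).
Proof. by split; [move=> v -> | exists (embH R h)]. Qed.

Lemma Polyt_pt n (h : 'rV[int]_n) : Polyt (@pt R n h).
Proof.
exists (unit : finType), tt, (fun _ => embH R h) => v; split.
  move=> ->; exists (fun _ => 1); split => //; split; first by rewrite big_const card_unit /= addr0.
  by rewrite big_const card_unit /= addr0 scale1r.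
move=> [c [_ [c1 ->]]]; rewrite /pt -scaler_suml c1 scale1r //.
Qed.

Lemma Polyt_neg n (A : vset R n) : Polyt A -> Polyt (neg A).
Proof.
move=> [I [i0 [p e]]]; exists I, i0, (fun i => - p i) => v; split.
  move=> /e [c [c0 [c1 cv]]]; exists c; split => //; split => //.
  by rewrite -[v]opprK cv -sumrN; apply: eq_bigr => i _; rewrite scalerN.
move=> [c [c0 [c1 cv]]]; apply/e; exists c; split => //; split => //.
by rewrite cv -sumrN; apply: eq_bigr => i _; rewrite scalerN opprK.
Qed.

Lemma Polyt_msum n (A B : vset R n) : Polyt A -> Polyt B -> Polyt (msum A B).
Proof.
move=> pA pB; move: (pA) (pB) => [I [i0 [p eA]]] [J [j0 [q eB]]].
exists ((I * J)%type : finType), (i0, j0), (fun k => p k.1 + q k.2) => v; split.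
  move=> hv; apply: farkas => u.
  have [i hi] := fin_max i0 (fun i => dotr u (p i)).
  have [j hj] := fin_max j0 (fun j => dotr u (q j)).
  exists (i, j); move: hv => [a [b [/eA aA [/eB bB ->]]]]; rewrite !dotrD /=.
  by apply: lerD; [apply: (conv_bound aA) | apply: (conv_bound bB)].
move=> [l [l0 [l1 ->]]].
exists (\sum_i (\sum_j l (i, j)) *: p i), (\sum_j (\sum_i l (i, j)) *: q j); split.
  apply/eA; exists (fun i => \sum_j l (i, j)); split; first by move=> i; apply: sumr_ge0.
  by split => //; rewrite pair_bigA -l1; apply: eq_bigr => -[].
split.
  apply/eB; exists (fun j => \sum_i l (i, j)); split; first by move=> j; apply: sumr_ge0.
  by split => //; rewrite exchange_big pair_bigA -l1; apply: eq_bigr => -[].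
under eq_bigr do rewrite scalerDr.
rewrite big_split /=; congr (_ + _).
  symmetry; under eq_bigr do rewrite scaler_suml.
  by rewrite pair_bigA; apply: eq_bigr => -[].
symmetry; under eq_bigr do rewrite scaler_suml.
by rewrite exchange_big pair_bigA; apply: eq_bigr => -[].
Qed.

Lemma dotr_embH n (u : 'rV[R]_n) p : dotr u (embH R p) = dotz u p.
Proof. by apply: eq_bigr => j _; rewrite mxE. Qed.

Lemma Polyt_hull n (s : seq 'rV[int]_n) : s != [::] -> Polyt (@conv_hull R n s).
Proof.
move=> ne; have hs : (0 < size s)%N by case: (s) ne.
by exists ('I_(size s) : finType), (Ordinal hs), (fun i : 'I_(size s) => embH R (nth 0 s i)).
Qed.

Lemma Supp_hull n (s : seq 'rV[int]_n) u : s != [::] -> Supp (@conv_hull R n s) u (H s u).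
Proof.
move=> ne; split.
  move=> v hv; apply: (@conv_bound _ _ (fun i : 'I_(size s) => embH R (nth 0 s i))) hv _ => i.
  by rewrite dotr_embH; apply: H_ub; apply: mem_nth.
have [p ps ->] := H_att u ne.
exists (embH R p); split; last by rewrite dotr_embH.
have hi : (index p s < size s)%N by rewrite index_mem.
have := @conv_pt _ _ (fun i : 'I_(size s) => embH R (nth 0 s i)) (Ordinal hi).
by rewrite /= nth_index.
Qed.

Lemma ip_hull n (A : vset R n) : integral_polytope A ->
  exists s, [/\ s != [::], vset_eq A (@conv_hull R n s) & Polyt A].
Proof.
move=> [s [ne e]]; have ne' : s != [::] by case: (s) ne.
exists s; split => //; have [I [i0 [p e2]]] := Polyt_hull ne'.
by exists I, i0, p => v; rewrite e e2.
Qed.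


Lemma dotr_embH0 n (u : 'rV[R]_n) : dotr u (embH R 0) = 0.
Proof. by rewrite dotr_embH /dotz big1 // => j _; rewrite mxE mulr0. Qed.

Lemma vset_eq_sym n (A B : vset R n) : vset_eq A B -> vset_eq B A.
Proof. by move=> e v; split => /e. Qed.

Lemma pt_ip n (h : 'rV[int]_n) : integral_polytope (@pt R n h).
Proof.
exists [:: h]; split => //; apply: poly_eq; first exact: Polyt_pt.
  exact: Polyt_hull.
move=> u; exists (dotr u (embH R h)); split; first exact: Supp_pt.
have -> : dotr u (embH R h) = H [:: h] u.
  by rewrite dotr_embH /H /= (max_l (lexx _)).
exact: Supp_hull.
Qed.

Lemma hull_ip n (s : seq 'rV[int]_n) : s != [::] -> integral_polytope (@conv_hull R n s).
Proof. by move=> ne; exists s; split => //; case: (s) ne. Qed.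

Lemma gr_eq_iff n (x y : gpair R n) f1 f2 g1 g2 :
  Polyt x.1 -> Polyt x.2 -> Polyt y.1 -> Polyt y.2 ->
  (forall u, Supp x.1 u (f1 u)) -> (forall u, Supp x.2 u (f2 u)) ->
  (forall u, Supp y.1 u (g1 u)) -> (forall u, Supp y.2 u (g2 u)) ->
  (gr_eq x y <-> forall u, f1 u + g2 u = g1 u + f2 u).
Proof.
move=> p1 p2 q1 q2 s1 s2 t1 t2; split.
  move=> [K [/ip_hull [k [nk eK _]] e]] u.
  have sK := Supp_eq (vset_eq_sym eK) (Supp_hull u nk).
  have SL := Supp_msum (Supp_msum (s1 u) (t2 u)) sK.
  have SR := Supp_msum (Supp_msum (t1 u) (s2 u)) sK.
  have := Supp_uniq (Supp_eq e SL) SR; lra.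
move=> h; exists (@pt R n 0); split; first exact: pt_ip.
apply: poly_eq; try by do ! apply: Polyt_msum => //; apply: Polyt_pt.
move=> u; exists (f1 u + g2 u + dotr u (embH R 0)); split.
  exact: Supp_msum (Supp_msum (s1 u) (t2 u)) (Supp_pt _ u).
rewrite h; exact: Supp_msum (Supp_msum (t1 u) (s2 u)) (Supp_pt 0 u).
Qed.

End Core.

Theorem theorem6p3 (R : realFieldType) (n : nat) :
  (forall x : gpair R n, is_gpair x ->
     (gr_eq (id_plus_star x) (@gzero R n) <->
      exists y : gpair R n, is_gpair y /\ gr_eq x (id_minus_star y))) /\
  (forall x : gpair R n, is_gpair x ->
     (gTeq (id_plus_star x) (@gzero R n) <->
      exists y : gpair R n, is_gpair y /\ gTeq x (id_minus_star y))).
Proof.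
have ext : forall x : gpair R n, is_gpair x -> exists s t,
    [/\ s != [::], t != [::], Polyt x.1 /\ Polyt x.2,
        (forall u, Supp x.1 u (H s u)) & (forall u, Supp x.2 u (H t u))].
  move=> x [/ip_hull [s [ns es ps]] /ip_hull [t [nt et pt']]].
  exists s, t; split => // u.
    exact: Supp_eq (vset_eq_sym es) (Supp_hull u ns).
  exact: Supp_eq (vset_eq_sym et) (Supp_hull u nt).
have P0 : Polyt (@pt R n 0) by apply: Polyt_pt.
have S0 (u : 'rV[R]_n) : Supp (@pt R n 0) u (dotr u (embH R 0)) by apply: Supp_pt.
have Ph (a : seq 'rV[int]_n) : a != [::] -> Polyt (@conv_hull R n a) by apply: Polyt_hull.
split => x hx; have [s [t [ns nt [pP pQ] sP sQ]]] := ext x hx.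
- split.
  + move=> hg.
    have hyp : forall u : 'rV[R]_n, H s u + H s (- u) = H t u + H t (- u).
      move=> u.
      have := proj1 (@gr_eq_iff R n (id_plus_star x) (@gzero R n)
        (fun u => H s u + H s (- u)) (fun u => H t u + H t (- u))
        (fun u => dotr u (embH R 0)) (fun u => dotr u (embH R 0))
        (Polyt_msum pP (Polyt_neg pP)) (Polyt_msum pQ (Polyt_neg pQ)) P0 P0
        (fun u => Supp_msum (sP u) (Supp_neg (sP (- u))))
        (fun u => Supp_msum (sQ u) (Supp_neg (sQ (- u)))) S0 S0) hg u.
      rewrite !dotr_embH0; lra.
    have [a [b [na nb eab]]] := core ns nt hyp.
    exists (@conv_hull R n a, @conv_hull R n b); split; first by split; apply: hull_ip.
    apply/(@gr_eq_iff R n x (id_minus_star (@conv_hull R n a, @conv_hull R n b))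
        (H s) (H t) (fun u => H a u + H b (- u)) (fun u => H b u + H a (- u))
        pP pQ (Polyt_msum (Ph a na) (Polyt_neg (Ph b nb)))
        (Polyt_msum (Ph b nb) (Polyt_neg (Ph a na))) sP sQ
        (fun u => Supp_msum (Supp_hull u na) (Supp_neg (Supp_hull (- u) nb)))
        (fun u => Supp_msum (Supp_hull u nb) (Supp_neg (Supp_hull (- u) na)))).
    move=> u; have := eab u; lra.
  + move=> [y [[/ip_hull [a [na ea pa]] /ip_hull [b [nb eb pb]]] hg]].
    have sa (u : 'rV[R]_n) : Supp y.1 u (H a u) := Supp_eq (vset_eq_sym ea) (Supp_hull u na).
    have sb (u : 'rV[R]_n) : Supp y.2 u (H b u) := Supp_eq (vset_eq_sym eb) (Supp_hull u nb).
    have e := proj1 (@gr_eq_iff R n x (id_minus_star y)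
        (H s) (H t) (fun u => H a u + H b (- u)) (fun u => H b u + H a (- u))
        pP pQ (Polyt_msum pa (Polyt_neg pb)) (Polyt_msum pb (Polyt_neg pa)) sP sQ
        (fun u => Supp_msum (sa u) (Supp_neg (sb (- u))))
        (fun u => Supp_msum (sb u) (Supp_neg (sa (- u))))) hg.
    apply/(@gr_eq_iff R n (id_plus_star x) (@gzero R n)
        (fun u => H s u + H s (- u)) (fun u => H t u + H t (- u))
        (fun u => dotr u (embH R 0)) (fun u => dotr u (embH R 0))
        (Polyt_msum pP (Polyt_neg pP)) (Polyt_msum pQ (Polyt_neg pQ)) P0 P0
        (fun u => Supp_msum (sP u) (Supp_neg (sP (- u))))
        (fun u => Supp_msum (sQ u) (Supp_neg (sQ (- u)))) S0 S0).
    move=> u; have := e u; have := e (- u); rewrite opprK !dotr_embH0 /=; lra.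
- split.
  + move=> [h hg].
    have Sh (u : 'rV[R]_n) : Supp (@pt R n h) u (dotr u (embH R h)) by apply: Supp_pt.
    have e := proj1 (@gr_eq_iff R n (id_plus_star x) (gadd (@gzero R n) (@gpt R n h))
        (fun u => H s u + H s (- u)) (fun u => H t u + H t (- u))
        (fun u => dotr u (embH R 0) + dotr u (embH R h))
        (fun u => dotr u (embH R 0) + dotr u (embH R 0))
        (Polyt_msum pP (Polyt_neg pP)) (Polyt_msum pQ (Polyt_neg pQ))
        (Polyt_msum P0 (@Polyt_pt R n h)) (Polyt_msum P0 P0)
        (fun u => Supp_msum (sP u) (Supp_neg (sP (- u))))
        (fun u => Supp_msum (sQ u) (Supp_neg (sQ (- u))))
        (fun u => Supp_msum (S0 u) (Sh u)) (fun u => Supp_msum (S0 u) (S0 u))) hg.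
    have hyp : forall u : 'rV[R]_n, H s u + H s (- u) = H t u + H t (- u).
      move=> u; have := e u; have := e (- u); rewrite opprK !dotr_embH0 dotrN /=; lra.
    have [a [b [na nb eab]]] := core ns nt hyp.
    exists (@conv_hull R n a, @conv_hull R n b); split; first by split; apply: hull_ip.
    exists 0.
    apply/(@gr_eq_iff R n x (gadd (id_minus_star (@conv_hull R n a, @conv_hull R n b)) (@gpt R n 0))
        (H s) (H t) (fun u => H a u + H b (- u) + dotr u (embH R 0))
        (fun u => H b u + H a (- u) + dotr u (embH R 0))
        pP pQ (Polyt_msum (Polyt_msum (Ph a na) (Polyt_neg (Ph b nb))) P0)
        (Polyt_msum (Polyt_msum (Ph b nb) (Polyt_neg (Ph a na))) P0) sP sQ
        (fun u => Supp_msum (Supp_msum (Supp_hull u na) (Supp_neg (Supp_hull (- u) nb))) (S0 u))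
        (fun u => Supp_msum (Supp_msum (Supp_hull u nb) (Supp_neg (Supp_hull (- u) na))) (S0 u))).
    move=> u; have := eab u; rewrite !dotr_embH0; lra.
  + move=> [y [[/ip_hull [a [na ea pa]] /ip_hull [b [nb eb pb]]] [h hg]]].
    have sa (u : 'rV[R]_n) : Supp y.1 u (H a u) := Supp_eq (vset_eq_sym ea) (Supp_hull u na).
    have sb (u : 'rV[R]_n) : Supp y.2 u (H b u) := Supp_eq (vset_eq_sym eb) (Supp_hull u nb).
    have Sh (u : 'rV[R]_n) : Supp (@pt R n h) u (dotr u (embH R h)) by apply: Supp_pt.
    have e := proj1 (@gr_eq_iff R n x (gadd (id_minus_star y) (@gpt R n h))
        (H s) (H t) (fun u => H a u + H b (- u) + dotr u (embH R h))
        (fun u => H b u + H a (- u) + dotr u (embH R 0))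
        pP pQ (Polyt_msum (Polyt_msum pa (Polyt_neg pb)) (@Polyt_pt R n h))
        (Polyt_msum (Polyt_msum pb (Polyt_neg pa)) P0) sP sQ
        (fun u => Supp_msum (Supp_msum (sa u) (Supp_neg (sb (- u)))) (Sh u))
        (fun u => Supp_msum (Supp_msum (sb u) (Supp_neg (sa (- u)))) (S0 u))) hg.
    exists 0.
    apply/(@gr_eq_iff R n (id_plus_star x) (gadd (@gzero R n) (@gpt R n 0))
        (fun u => H s u + H s (- u)) (fun u => H t u + H t (- u))
        (fun u => dotr u (embH R 0) + dotr u (embH R 0))
        (fun u => dotr u (embH R 0) + dotr u (embH R 0))
        (Polyt_msum pP (Polyt_neg pP)) (Polyt_msum pQ (Polyt_neg pQ))
        (Polyt_msum P0 P0) (Polyt_msum P0 P0)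
        (fun u => Supp_msum (sP u) (Supp_neg (sP (- u))))
        (fun u => Supp_msum (sQ u) (Supp_neg (sQ (- u))))
        (fun u => Supp_msum (S0 u) (S0 u)) (fun u => Supp_msum (S0 u) (S0 u))).
    move=> u; have := e u; have := e (- u); rewrite opprK !dotr_embH0 dotrN /=; lra.
Qed.
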